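(* Let $W$ be a channel with finite input alphabet $\mathcal X$ and finite output alphabet $\mathcal Y$, let $P$ be an input distribution with $I(P,W)=C_W$ and $V_{P,W}>0$, and let $R_2<0$. Then \[ \lim_{n\to\infty}\ n\min_{0\le s\le1}\Big(C_Ws+\frac{R_2}{\sqrt n}s+\psi_P(s)\Big)=-\frac{R_2^2}{2V_{P,W}}. \]
   Context: Logs natural. $W_P=\sum_xP(x)W_x$, $D$ is relative entropy, $I(P,W)=\sum_xP(x)D(W_x\|W_P)$, $C_W=\max_PI(P,W)$, $V_{P,W}=\sum_xP(x)\sum_yW_x(y)\big(\log\frac{W_x(y)}{W_P(y)}-D(W_x\|W_P)\big)^2$, and the Gallager function is $\psi_P(s)=\log\sum_y\big(\sum_xP(x)W_x(y)^{1/(1+s)}\big)^{1+s}$ for $s\ge0$. *)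

(* Defs.v *)
From Stdlib Require Import Reals Lra.
Open Scope R_scope.

(* Finite alphabets: input alphabet X = {0,...,nx-1}, output Y = {0,...,ny-1}.
   A channel is W : nat -> nat -> R with W x y = W_x(y). *)

Fixpoint fsum (n : nat) (f : nat -> R) : R :=
  match n with
  | O => 0
  | S m => fsum m f + f m
  end.

Definition is_distr (n : nat) (P : nat -> R) : Prop :=
  (forall i, (i < n)%nat -> 0 <= P i) /\ fsum n P = 1.

Definition is_channel (nx ny : nat) (W : nat -> nat -> R) : Prop :=
  forall x, (x < nx)%nat -> is_distr ny (W x).

Definition WP (nx : nat) (P : nat -> R) (W : nat -> nat -> R) (y : nat) : R :=
  fsum nx (fun x => P x * W x y).

(* relative entropy D(W_x || W_P), natural log, convention 0 log 0 = 0 *)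
Definition Dx (nx ny : nat) (P : nat -> R) (W : nat -> nat -> R) (x : nat) : R :=
  fsum ny (fun y => if Rlt_dec 0 (W x y)
                    then W x y * ln (W x y / WP nx P W y) else 0).

Definition MI (nx ny : nat) (P : nat -> R) (W : nat -> nat -> R) : R :=
  fsum nx (fun x => if Rlt_dec 0 (P x) then P x * Dx nx ny P W x else 0).

(* C is the capacity: C = max_P I(P,W) (here: the least upper bound of I(P,W)
   over input distributions; the theorem additionally assumes it is attained). *)
Definition is_capacity (nx ny : nat) (W : nat -> nat -> R) (C : R) : Prop :=
  is_lub (fun r => exists Q, is_distr nx Q /\ r = MI nx ny Q W) C.

Definition Vdisp (nx ny : nat) (P : nat -> R) (W : nat -> nat -> R) : R :=
  fsum nx (fun x => if Rlt_dec 0 (P x) then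
    P x * fsum ny (fun y => if Rlt_dec 0 (W x y) then
       W x y * (ln (W x y / WP nx P W y) - Dx nx ny P W x) ^ 2 else 0)
    else 0).

(* a^b for a >= 0, b > 0, with 0^b = 0 *)
Definition rpow (a b : R) : R := if Rlt_dec 0 a then Rpower a b else 0.

Definition psi (nx ny : nat) (P : nat -> R) (W : nat -> nat -> R) (s : R) : R :=
  ln (fsum ny (fun y =>
        rpow (fsum nx (fun x => P x * rpow (W x y) (1 / (1 + s)))) (1 + s))).

Definition is_min_on (f : R -> R) (a b m : R) : Prop :=
  (exists s, a <= s <= b /\ f s = m) /\ (forall s, a <= s <= b -> m <= f s).

(* Main.v *)
Require Import Defs.
From Stdlib Require Import Reals Lra Lia.
Open Scope R_scope.

Lemma fsum_ext n f g : (forall i, (i < n)%nat -> f i = g i) -> fsum n f = fsum n g.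
Proof. induction n; simpl; intros H; auto. rewrite IHn by (intros; apply H; lia). rewrite H by lia. reflexivity. Qed.

Lemma fsum_plus n f g : fsum n (fun i => f i + g i) = fsum n f + fsum n g.
Proof. induction n; simpl; [lra|]. rewrite IHn; lra. Qed.

Lemma fsum_minus n f g : fsum n (fun i => f i - g i) = fsum n f - fsum n g.
Proof. induction n; simpl; [lra|]. rewrite IHn; lra. Qed.

Lemma fsum_scal n c f : fsum n (fun i => c * f i) = c * fsum n f.
Proof. induction n; simpl; [lra|]. rewrite IHn; lra. Qed.

Lemma fsum_scal_r n c f : fsum n (fun i => f i * c) = fsum n f * c.
Proof. induction n; simpl; [lra|]. rewrite IHn; lra. Qed.

Lemma fsum_zero n : fsum n (fun _ => 0) = 0.
Proof. induction n; simpl; [lra|]. rewrite IHn; lra. Qed.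

Lemma fsum_swap n m f : fsum n (fun i => fsum m (fun j => f i j)) = fsum m (fun j => fsum n (fun i => f i j)).
Proof. induction n; simpl. { rewrite fsum_zero; auto. } rewrite IHn. rewrite <- fsum_plus. reflexivity. Qed.

Lemma fsum_nonneg n f : (forall i, (i < n)%nat -> 0 <= f i) -> 0 <= fsum n f.
Proof. induction n; simpl; intros H; [lra|]. assert (0 <= f n) by (apply H; lia). assert (0 <= fsum n f) by (apply IHn; intros; apply H; lia). lra. Qed.

Lemma fsum_le n f g : (forall i, (i < n)%nat -> f i <= g i) -> fsum n f <= fsum n g.
Proof. induction n; simpl; intros H; [lra|]. assert (f n <= g n) by (apply H; lia). assert (fsum n f <= fsum n g) by (apply IHn; intros; apply H; lia). lra. Qed.

Lemma fsum_term_le n f i : (forall j, (j < n)%nat -> 0 <= f j) -> (i < n)%nat -> f i <= fsum n f.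
Proof. induction n; simpl; intros H Hi; [lia|]. destruct (Nat.eq_dec i n).
 - subst. assert (0 <= fsum n f) by (apply fsum_nonneg; intros; apply H; lia). lra.
 - assert (f i <= fsum n f) by (apply IHn; [intros; apply H; lia| lia]). assert (0 <= f n) by (apply H; lia). lra. Qed.

Lemma fsum_zero_term n f i : (forall j, (j < n)%nat -> 0 <= f j) -> fsum n f = 0 -> (i < n)%nat -> f i = 0.
Proof. intros H H0 Hi. assert (f i <= fsum n f) by (apply fsum_term_le; auto). assert (0 <= f i) by auto. lra. Qed.

Lemma fsum_pos_ex n f : 0 < fsum n f -> exists i, (i < n)%nat /\ 0 < f i.
Proof. induction n; simpl; intros H; [lra|]. destruct (Rlt_dec 0 (f n)).
 - exists n; split; auto.
 - destruct IHn as [i [Hi Hf]]; [lra|]. exists i; split; auto. Qed.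

Lemma fsum_abs n f : Rabs (fsum n f) <= fsum n (fun i => Rabs (f i)).
Proof. induction n; simpl. { rewrite Rabs_R0; lra. } eapply Rle_trans; [apply Rabs_triang|]. lra. Qed.

Definition ex (x z : nat) : R := if Nat.eq_dec z x then 1 else 0.

Lemma fsum_delta_aux n x f : (n <= x)%nat -> fsum n (fun z => ex x z * f z) = 0.
Proof. induction n; simpl; intros H; auto. rewrite IHn by lia. unfold ex. destruct (Nat.eq_dec n x); [lia|]. lra. Qed.

Lemma fsum_delta n x f : (x < n)%nat -> fsum n (fun z => ex x z * f z) = f x.
Proof. induction n; simpl; intros H; [lia|]. destruct (Nat.eq_dec x n).
 - subst. rewrite fsum_delta_aux by lia. unfold ex. destruct (Nat.eq_dec n n); [lra|congruence].
 - rewrite IHn by lia. unfold ex. destruct (Nat.eq_dec n x); [congruence|]. lra. Qed.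

Definition o2 (e : R -> R) := forall eps, 0 < eps -> exists del, 0 < del /\
  forall s, 0 <= s < del -> Rabs (e s) <= eps * (s*s).

Lemma o2_ext e1 e2 d0 : 0 < d0 -> (forall s, 0 <= s < d0 -> e1 s = e2 s) -> o2 e1 -> o2 e2.
Proof. intros Hd Heq H eps Heps. destruct (H eps Heps) as [del [Hdel Hb]].
 exists (Rmin del d0). split. { apply Rmin_pos; auto. }
 intros s Hs. rewrite <- Heq. apply Hb. split; [lra|]. eapply Rlt_le_trans; [apply Hs|apply Rmin_l].
 split; [lra|]. eapply Rlt_le_trans; [apply Hs|apply Rmin_r]. Qed.

Lemma o2_plus e1 e2 : o2 e1 -> o2 e2 -> o2 (fun s => e1 s + e2 s).
Proof. intros H1 H2 eps Heps. destruct (H1 (eps/2)) as [d1 [Hd1 B1]]; [lra|].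
 destruct (H2 (eps/2)) as [d2 [Hd2 B2]]; [lra|].
 exists (Rmin d1 d2). split. { apply Rmin_pos; auto. }
 intros s Hs. assert (s < d1) by (eapply Rlt_le_trans; [apply Hs|apply Rmin_l]).
 assert (s < d2) by (eapply Rlt_le_trans; [apply Hs|apply Rmin_r]).
 specialize (B1 s ltac:(lra)). specialize (B2 s ltac:(lra)).
 eapply Rle_trans; [apply Rabs_triang|]. lra. Qed.

Lemma o2_scal c e : o2 e -> o2 (fun s => c * e s).
Proof. intros H eps Heps. destruct (H (eps / (Rabs c + 1))) as [d [Hd B]].
 { apply Rdiv_lt_0_compat; auto. pose proof (Rabs_pos c); lra. }
 exists d. split; auto. intros s Hs. specialize (B s Hs). rewrite Rabs_mult.
 pose proof (Rabs_pos c). pose proof (Rabs_pos (e s)).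
 assert (Rabs c * Rabs (e s) <= (Rabs c + 1) * (eps / (Rabs c + 1) * (s * s))).
 { apply Rmult_le_compat; lra. }
 replace ((Rabs c + 1) * (eps / (Rabs c + 1) * (s * s))) with (eps * (s*s)) in H2 by (field; lra). lra. Qed.

Lemma o2_zero : o2 (fun _ => 0).
Proof. intros eps Heps. exists 1. split; [lra|]. intros s Hs. rewrite Rabs_R0. nra. Qed.

Lemma o2_cubic e K d0 : 0 < d0 -> (forall s, 0 <= s < d0 -> Rabs (e s) <= K * (s*s*s)) -> o2 e.
Proof. intros Hd0 H eps Heps. exists (Rmin d0 (eps / (Rabs K + 1))). split.
 { apply Rmin_pos; auto. apply Rdiv_lt_0_compat; auto. pose proof (Rabs_pos K); lra. }
 intros s Hs. assert (s < d0) by (eapply Rlt_le_trans; [apply Hs|apply Rmin_l]).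
 assert (s < eps / (Rabs K + 1)) by (eapply Rlt_le_trans; [apply Hs|apply Rmin_r]).
 pose proof (Rabs_pos K). pose proof (Rle_abs K).
 assert (s * (Rabs K + 1) <= eps).
 { apply Rlt_le. apply (Rmult_lt_compat_r (Rabs K + 1)) in H1; [|lra].
   replace (eps / (Rabs K + 1) * (Rabs K + 1)) with eps in H1 by (field; lra). lra. }
 specialize (H s ltac:(lra)). assert (0 <= s*s) by nra.
 assert (0 <= s*s*s) by (apply Rmult_le_pos; nra).
 assert (K * (s*s*s) <= (Rabs K + 1) * s * (s*s)).
 { replace ((Rabs K + 1) * s * (s*s)) with ((Rabs K + 1) * (s*s*s)) by ring. apply Rmult_le_compat_r; lra. }
 assert ((Rabs K + 1) * s * (s*s) <= eps * (s*s)) by (apply Rmult_le_compat_r; lra). lra. Qed.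

Lemma o2_mulB e h K d0 : 0 < d0 -> (forall s, 0 <= s < d0 -> Rabs (h s) <= K) -> o2 e ->
  o2 (fun s => e s * h s).
Proof. intros Hd0 Hh H eps Heps. destruct (H (eps / (Rabs K + 1))) as [d [Hd B]].
 { apply Rdiv_lt_0_compat; auto. pose proof (Rabs_pos K); lra. }
 exists (Rmin d d0). split. { apply Rmin_pos; auto. }
 intros s Hs. assert (s < d) by (eapply Rlt_le_trans; [apply Hs|apply Rmin_l]).
 assert (s < d0) by (eapply Rlt_le_trans; [apply Hs|apply Rmin_r]).
 specialize (B s ltac:(lra)). specialize (Hh s ltac:(lra)). rewrite Rabs_mult.
 pose proof (Rabs_pos (h s)). pose proof (Rabs_pos (e s)). pose proof (Rle_abs K).
 assert (Rabs (e s) * Rabs (h s) <= (eps / (Rabs K + 1) * (s * s)) * (Rabs K + 1)).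
 { apply Rmult_le_compat; lra. }
 replace ((eps / (Rabs K + 1) * (s * s)) * (Rabs K + 1)) with (eps * (s*s)) in H5 by (field; pose proof (Rabs_pos K); lra). lra. Qed.

Definition J (f : R -> R) (c a b : R) := o2 (fun s => f s - c - a*s - b*(s*s)).

Lemma J_coef f c a b c' a' b' : J f c a b -> c = c' -> a = a' -> b = b' -> J f c' a' b'.
Proof. intros H -> -> ->; auto. Qed.

Lemma J_fext f g c a b d0 : 0 < d0 -> (forall s, 0 <= s < d0 -> f s = g s) -> J f c a b -> J g c a b.
Proof. intros Hd H HJ. eapply o2_ext; [apply Hd| |apply HJ]. intros s Hs; simpl. rewrite H; auto. Qed.

Lemma J_const c : J (fun _ => c) c 0 0.
Proof. eapply o2_ext; [apply Rlt_0_1| |apply o2_zero]. intros; simpl; ring. Qed.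

Lemma J_id : J (fun s => s) 0 1 0.
Proof. eapply o2_ext; [apply Rlt_0_1| |apply o2_zero]. intros; simpl; ring. Qed.

Lemma J_plus f g c a b c' a' b' : J f c a b -> J g c' a' b' ->
  J (fun s => f s + g s) (c + c') (a + a') (b + b').
Proof. intros H1 H2. eapply o2_ext; [apply Rlt_0_1| |apply (o2_plus _ _ H1 H2)]. intros; simpl; ring. Qed.

Lemma J_scal k f c a b : J f c a b -> J (fun s => k * f s) (k*c) (k*a) (k*b).
Proof. intros H. eapply o2_ext; [apply Rlt_0_1| |apply (o2_scal k _ H)]. intros; simpl; ring. Qed.

Lemma J_fsum n (f : nat -> R -> R) c a b : (forall i, (i < n)%nat -> J (f i) (c i) (a i) (b i)) ->
  J (fun s => fsum n (fun i => f i s)) (fsum n c) (fsum n a) (fsum n b).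
Proof. induction n; intros H; simpl.
 - apply J_coef with 0 0 0; [apply J_const| ring| ring| ring].
 - apply (J_plus (fun s => fsum n (fun i => f i s)) (f n)).
   + apply IHn. intros; apply H; lia.
   + apply H; lia. Qed.

Lemma J_bound f c a b : J f c a b -> exists K d, 0 < d /\ 0 <= K /\ forall s, 0 <= s < d -> Rabs (f s - c) <= K * s.
Proof. intros H. destruct (H 1 Rlt_0_1) as [d [Hd B]]. exists (Rabs a + Rabs b + 1), (Rmin d 1).
 split. { apply Rmin_pos; lra. } split. { pose proof (Rabs_pos a); pose proof (Rabs_pos b); lra. }
 intros s Hs. assert (s < d) by (eapply Rlt_le_trans; [apply Hs|apply Rmin_l]).
 assert (s < 1) by (eapply Rlt_le_trans; [apply Hs|apply Rmin_r]).
 specialize (B s ltac:(lra)).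
 replace (f s - c) with ((f s - c - a*s - b*(s*s)) + a*s + b*(s*s)) by ring.
 pose proof (Rabs_triang (f s - c - a*s - b*(s*s) + a*s) (b*(s*s))).
 pose proof (Rabs_triang (f s - c - a*s - b*(s*s)) (a*s)).
 rewrite !Rabs_mult in *. rewrite (Rabs_right s) in * by lra.
 pose proof (Rabs_pos a); pose proof (Rabs_pos b). assert (s*s <= s) by nra.
 assert (Rabs b * (s*s) <= Rabs b * s) by (apply Rmult_le_compat_l; lra). nra. Qed.

Lemma J_abs_bound f c a b : J f c a b -> exists K d, 0 < d /\ forall s, 0 <= s < d -> Rabs (f s) <= K.
Proof. intros H. destruct (J_bound _ _ _ _ H) as [K [d [Hd [HK B]]]]. exists (Rabs c + K), (Rmin d 1).
 split. { apply Rmin_pos; lra. } intros s Hs.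
 assert (s < d) by (eapply Rlt_le_trans; [apply Hs|apply Rmin_l]).
 assert (s < 1) by (eapply Rlt_le_trans; [apply Hs|apply Rmin_r]).
 specialize (B s ltac:(lra)). replace (f s) with ((f s - c) + c) by ring.
 eapply Rle_trans; [apply Rabs_triang|]. nra. Qed.

Lemma J_mul f g c a b c' a' b' : J f c a b -> J g c' a' b' ->
  J (fun s => f s * g s) (c*c') (c*a' + a*c') (c*b' + a*a' + b*c').
Proof. intros H1 H2. unfold J.
 destruct (J_abs_bound _ _ _ _ H2) as [Kg [dg [Hdg Bg]]].
 set (e1 := fun s => f s - c - a*s - b*(s*s)). set (e2 := fun s => g s - c' - a'*s - b'*(s*s)).
 set (p := fun s => c + a*s + b*(s*s)).
 apply o2_ext with (e1 := fun s => (e1 s * g s + e2 s * p s) + ((a*b' + b*a')*(s*s*s) + b*b'*(s*s*s*s))) (d0 := 1).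
 { lra. } { intros s _. unfold e1, e2, p. ring. }
 apply o2_plus; [apply o2_plus|].
 - apply o2_mulB with Kg dg; auto.
 - apply o2_mulB with (Rabs c + Rabs a + Rabs b) 1; auto. { lra. }
   intros s Hs. unfold p. pose proof (Rabs_triang (c + a*s) (b*(s*s))). pose proof (Rabs_triang c (a*s)).
   rewrite !Rabs_mult in *. rewrite (Rabs_right s) in * by lra.
   pose proof (Rabs_pos a); pose proof (Rabs_pos b). assert (s*s <= 1) by nra.
   assert (Rabs b * (s*s) <= Rabs b) by nra. assert (Rabs a * s <= Rabs a) by nra. lra.
 - apply o2_cubic with (Rabs (a*b' + b*a') + Rabs (b*b')) 1. { lra. }
   intros s Hs. pose proof (Rabs_triang ((a*b' + b*a')*(s*s*s)) (b*b'*(s*s*s*s))).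
   rewrite (Rabs_mult (a*b' + b*a')) in H. rewrite (Rabs_mult (b*b')) in H.
   assert (0 <= s*s*s) by (apply Rmult_le_pos; nra).
   rewrite (Rabs_right (s*s*s)) in H by lra. rewrite (Rabs_right (s*s*s*s)) in H by nra.
   pose proof (Rabs_pos (a*b' + b*a')); pose proof (Rabs_pos (b*b')).
   assert (Rabs (b*b') * (s*s*s*s) <= Rabs (b*b') * (s*s*s)) by (apply Rmult_le_compat_l; nra). nra. Qed.

Definition Tay (F : R -> R) (c d1 d2 : R) := forall eps, 0 < eps -> exists del, 0 < del /\
  forall u, Rabs u < del -> Rabs (F (c + u) - F c - d1*u - d2*(u*u)) <= eps * (u*u).

Lemma J_comp F f c a b d1 d2 : Tay F c d1 d2 -> J f c a b ->
  J (fun s => F (f s)) (F c) (d1*a) (d1*b + d2*(a*a)).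
Proof. intros HF H. unfold J.
 destruct (J_bound _ _ _ _ H) as [K [d [Hd [HK B]]]].
 destruct (H 1 Rlt_0_1) as [d' [Hd' B']].
 set (u := fun s => f s - c).
 apply o2_ext with (d0 := 1) (e1 := fun s =>
   (F (c + u s) - F c - d1 * u s - d2 * (u s * u s)) + d1 * (f s - c - a*s - b*(s*s))
   + d2 * ((u s - a*s) * (u s + a*s))). { lra. }
 { intros s _. unfold u. replace (c + (f s - c)) with (f s) by ring. ring. }
 apply o2_plus; [apply o2_plus|].
 - intros eps Heps. destruct (HF (eps / ((K+1)*(K+1)))) as [dF [HdF BF]].
   { apply Rdiv_lt_0_compat; auto. nra. }
   exists (Rmin d (dF / (K+1))). split. { apply Rmin_pos; auto. apply Rdiv_lt_0_compat; lra. }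
   intros s Hs. assert (s < d) by (eapply Rlt_le_trans; [apply Hs|apply Rmin_l]).
   assert (s < dF/(K+1)) by (eapply Rlt_le_trans; [apply Hs|apply Rmin_r]).
   specialize (B s ltac:(lra)). fold (u s) in B.
   assert (s * (K+1) < dF). { apply (Rmult_lt_compat_r (K+1)) in H1; [|lra].
     replace (dF / (K+1) * (K+1)) with dF in H1 by (field; lra). lra. }
   assert (Rabs (u s) < dF) by nra.
   specialize (BF (u s) H3).
   assert (u s * u s <= (K+1)*(K+1)*(s*s)).
   { pose proof (Rabs_pos (u s)). assert (Rabs (u s) <= (K+1)*s) by nra.
     replace (u s * u s) with (Rabs (u s) * Rabs (u s)) by (rewrite <- Rabs_mult; apply Rabs_right; nra).
     assert (Rabs (u s) * Rabs (u s) <= ((K+1)*s)*((K+1)*s)) by (apply Rmult_le_compat; lra).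
     lra. }
   eapply Rle_trans; [apply BF|].
   replace (eps * (s*s)) with (eps / ((K+1)*(K+1)) * ((K+1)*(K+1)*(s*s))) by (field; lra).
   apply Rmult_le_compat_l; auto. apply Rlt_le, Rdiv_lt_0_compat; auto; nra.
 - apply o2_scal. apply H.
 - apply o2_scal. apply o2_cubic with ((Rabs b + 1) * (Rabs b + 1 + 2 * Rabs a)) (Rmin d' 1).
   { apply Rmin_pos; lra. }
   intros s Hs. assert (s < d') by (eapply Rlt_le_trans; [apply Hs|apply Rmin_l]).
   assert (s < 1) by (eapply Rlt_le_trans; [apply Hs|apply Rmin_r]).
   specialize (B' s ltac:(lra)). unfold u.
   assert (Rabs (f s - c - a*s) <= (Rabs b + 1) * (s*s)).
   { replace (f s - c - a*s) with ((f s - c - a*s - b*(s*s)) + b*(s*s)) by ring.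
     eapply Rle_trans; [apply Rabs_triang|]. rewrite Rabs_mult. rewrite (Rabs_right (s*s)) by nra. lra. }
   assert (Rabs (f s - c + a*s) <= (Rabs b + 1 + 2 * Rabs a) * s).
   { replace (f s - c + a*s) with ((f s - c - a*s) + 2*(a*s)) by ring.
     eapply Rle_trans; [apply Rabs_triang|]. rewrite Rabs_mult, Rabs_mult. rewrite (Rabs_right s) by lra.
     rewrite (Rabs_right 2) by lra. pose proof (Rabs_pos b). assert (s*s <= s) by nra. nra. }
   rewrite Rabs_mult. pose proof (Rabs_pos (f s - c - a*s)). pose proof (Rabs_pos (f s - c + a*s)).
   assert (Rabs (f s - c - a * s) * Rabs (f s - c + a * s) <= ((Rabs b + 1) * (s*s)) * ((Rabs b + 1 + 2 * Rabs a) * s)).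
   { apply Rmult_le_compat; auto. }
   nra. Qed.

Lemma peano (f f' : R -> R) (l d0 : R) : 0 < d0 ->
  (forall x, Rabs x < d0 -> derivable_pt_lim f x (f' x)) -> derivable_pt_lim f' 0 l ->
  Tay f 0 (f' 0) (l/2).
Proof. intros Hd0 Hf Hf' eps Heps.
 destruct (Hf' eps Heps) as [delta Hdelta].
 exists (Rmin d0 delta). split. { apply Rmin_pos; auto. apply cond_pos. }
 intros u Hu. assert (Hu1: Rabs u < d0) by (eapply Rlt_le_trans; [apply Hu|apply Rmin_l]).
 assert (Hu2: Rabs u < delta) by (eapply Rlt_le_trans; [apply Hu|apply Rmin_r]).
 set (phi := fun x => f x - f 0 - f' 0 * x - l/2 * (x*x)).
 set (phi' := fun x => f' x - f' 0 - l * x).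
 assert (Dphi : forall x, Rabs x < d0 -> derivable_pt_lim phi x (phi' x)).
 { intros x Hx. unfold phi, phi'.
   replace (f' x - f' 0 - l * x) with (f' x - 0 - f' 0 * 1 - l/2 * (1*x + x*1)) by field.
   apply (derivable_pt_lim_minus (fun x => f x - f 0 - f' 0 * x) (fun x => l/2*(x*x))).
   - apply (derivable_pt_lim_minus (fun x => f x - f 0) (fun x => f' 0 * x)).
     + apply (derivable_pt_lim_minus f (fun _ => f 0)). apply Hf; auto. apply derivable_pt_lim_const.
     + apply (derivable_pt_lim_scal id). apply derivable_pt_lim_id.
   - apply (derivable_pt_lim_scal (fun x => x * x)). apply (derivable_pt_lim_mult id id); apply derivable_pt_lim_id. }
 assert (Bphi' : forall x, Rabs x <= Rabs u -> Rabs (phi' x) <= eps * Rabs x).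
 { intros x Hx. destruct (Req_dec x 0) as [->|Hx0].
   - unfold phi'. rewrite Rabs_R0. replace (f' 0 - f' 0 - l*0) with 0 by ring. rewrite Rabs_R0. lra.
   - assert (Rabs x < delta) by lra. specialize (Hdelta x Hx0 H).
     rewrite Rplus_0_l in Hdelta.
     replace (phi' x) with (((f' x - f' 0) / x - l) * x) by (unfold phi'; field; auto).
     rewrite Rabs_mult. apply Rmult_le_compat_r; [apply Rabs_pos| lra]. }
 replace (f (0 + u) - f 0 - f' 0 * u - l / 2 * (u * u)) with (phi u - phi 0) by (unfold phi; rewrite Rplus_0_l; ring).
 destruct (Rtotal_order u 0) as [Hlt|[Heq|Hgt]].
 - destruct (MVT_cor2 phi phi' u 0 Hlt) as [xi [Hxi Hxib]].
   { intros c Hc. apply Dphi. apply Rabs_def1; [|]; pose proof (Rabs_def2 u d0 Hu1); lra. }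
   assert (phi u - phi 0 = - (phi' xi * (0 - u))) by lra. rewrite H, Rabs_Ropp, Rabs_mult.
   assert (Rabs xi <= Rabs u) by (rewrite !Rabs_left1; lra).
   specialize (Bphi' xi H0). replace (0 - u) with (- u) by ring. rewrite Rabs_Ropp.
   replace (u*u) with (Rabs u * Rabs u) by (rewrite <- Rabs_mult; apply Rabs_right; nra).
   pose proof (Rabs_pos u). pose proof (Rabs_pos (phi' xi)). pose proof (Rabs_pos xi).
   apply Rle_trans with (eps * Rabs xi * Rabs u). { apply Rmult_le_compat_r; lra. }
   rewrite Rmult_assoc. apply Rmult_le_compat_l; [lra|]. apply Rmult_le_compat_r; lra.
 - subst. replace (phi 0 - phi 0) with 0 by ring. rewrite Rabs_R0. nra.
 - destruct (MVT_cor2 phi phi' 0 u Hgt) as [xi [Hxi Hxib]].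
   { intros c Hc. apply Dphi. apply Rabs_def1; [|]; pose proof (Rabs_def2 u d0 Hu1); lra. }
   rewrite Hxi, Rabs_mult.
   assert (Rabs xi <= Rabs u) by (rewrite !Rabs_right; lra).
   specialize (Bphi' xi H). replace (u - 0) with u by ring.
   replace (u*u) with (Rabs u * Rabs u) by (rewrite <- Rabs_mult; apply Rabs_right; nra).
   pose proof (Rabs_pos u). pose proof (Rabs_pos (phi' xi)). pose proof (Rabs_pos xi).
   apply Rle_trans with (eps * Rabs xi * Rabs u). { apply Rmult_le_compat_r; lra. }
   rewrite Rmult_assoc. apply Rmult_le_compat_l; [lra|]. apply Rmult_le_compat_r; lra.
Qed.

Lemma Tay_exp c : Tay exp c (exp c) (exp c / 2).
Proof. intros eps Heps.
 assert (T0 : Tay exp 0 (exp 0) (1/2)).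
 { replace (1/2) with (exp 0 / 2) by (rewrite exp_0; field). apply (peano exp exp (exp 0) 1); [lra| |].
   intros; apply derivable_pt_lim_exp. apply derivable_pt_lim_exp. }
 pose proof (exp_pos c) as Hc.
 destruct (T0 (eps / exp c)) as [del [Hdel B]]. { apply Rdiv_lt_0_compat; auto. }
 exists del; split; auto. intros u Hu. specialize (B u Hu). rewrite exp_0, Rplus_0_l in B.
 replace (exp (c + u) - exp c - exp c * u - exp c / 2 * (u * u)) with (exp c * (exp u - 1 - 1*u - 1/2*(u*u))) by (rewrite exp_plus; field).
 rewrite Rabs_mult, (Rabs_right (exp c)) by lra.
 replace (eps * (u*u)) with (exp c * (eps / exp c * (u*u))) by (field; lra).
 apply Rmult_le_compat_l; lra. Qed.

Lemma Tay_ln c : 0 < c -> Tay ln c (/ c) (- / (2 * (c*c))).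
Proof. intros Hc eps Heps.
 assert (T0 : Tay (fun v => ln (1 + v)) 0 1 (-1/2)).
 { replace 1 with ((fun x => 1 / (1 + x)) 0) at 1 by (simpl; field).
   replace (-1/2) with (-1 / 2) by ring.
   apply (peano (fun v => ln (1 + v)) (fun x => 1 / (1 + x)) (-1) (1/2)); [lra| |].
   - intros x Hx. pose proof (Rabs_def2 x _ Hx).
     replace (1 / (1 + x)) with (/ (1+x) * (0 + 1)) by (field; lra).
     apply (derivable_pt_lim_comp (fun v => 1 + v) ln).
     + apply (derivable_pt_lim_plus (fun _ => 1) id). apply derivable_pt_lim_const. apply derivable_pt_lim_id.
     + apply derivable_pt_lim_ln. lra.
   - replace (-1) with ((0 * (1 + 0) - (0 + 1) * 1) / (1 + 0)²) by (unfold Rsqr; field).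
     apply (derivable_pt_lim_div (fun _ => 1) (fun v => 1 + v)).
     + apply derivable_pt_lim_const.
     + apply (derivable_pt_lim_plus (fun _ => 1) id). apply derivable_pt_lim_const. apply derivable_pt_lim_id.
     + lra. }
 destruct (T0 (eps * (c*c))) as [del [Hdel B]]. { apply Rmult_lt_0_compat; nra. }
 exists (Rmin (c/2) (del * c)). split. { apply Rmin_pos; nra. }
 intros u Hu. assert (Hu1: Rabs u < c/2) by (eapply Rlt_le_trans; [apply Hu|apply Rmin_l]).
 assert (Hu2: Rabs u < del * c) by (eapply Rlt_le_trans; [apply Hu|apply Rmin_r]).
 assert (Hv: Rabs (u / c) < del).
 { unfold Rdiv. rewrite Rabs_mult, (Rabs_right (/c)) by (apply Rle_ge, Rlt_le, Rinv_0_lt_compat; auto).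
   apply (Rmult_lt_reg_r c); auto. rewrite Rmult_assoc, Rinv_l by lra. lra. }
 specialize (B _ Hv). rewrite Rplus_0_l in B. replace (ln (1 + 0)) with 0 in B by (rewrite Rplus_0_r, ln_1; auto).
 pose proof (Rabs_def2 u _ Hu1).
 assert (ln (c + u) = ln c + ln (1 + u / c)).
 { assert (0 < 1 + u/c). { assert (Rabs (u/c) <= 1/2).
       { unfold Rdiv. rewrite Rabs_mult, (Rabs_right (/c)) by (apply Rle_ge, Rlt_le, Rinv_0_lt_compat; auto).
         apply (Rmult_le_reg_r c); auto. rewrite Rmult_assoc, Rinv_l by lra. lra. }
       pose proof (Rabs_def2 (u/c) 1 ltac:(lra)). lra. }
   rewrite <- ln_mult by auto.
   f_equal. field. lra. }
 rewrite H0.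
 replace (ln c + ln (1 + u / c) - ln c - / c * u - - / (2 * (c * c)) * (u * u)) with (ln (1 + u / c) - 0 - 1 * (u / c) - -1/2 * (u / c * (u / c))) by (field; lra).
 eapply Rle_trans; [apply B|]. right. field. lra. Qed.

Section Info.
Variables (nx ny : nat) (W : nat -> nat -> R) (P : nat -> R).
Hypothesis Hch : is_channel nx ny W.
Hypothesis Hd : is_distr nx P.

Definition Q y := WP nx P W y.
Definition io x y := ln (W x y) - ln (Q y).
Definition rr s := - s / (1 + s).
Definition pi x y := P x * W x y / Q y.
Definition Xf y s := fsum nx (fun x => pi x y * exp (rr s * io x y)).
Definition mm y := fsum nx (fun x => pi x y * io x y).
Definition bb y := fsum nx (fun x => pi x y * (io x y * io x y)).
Definition Ii := fsum ny (fun y => fsum nx (fun x => P x * W x y * io x y)).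
Definition S2 := fsum ny (fun y => fsum nx (fun x => P x * W x y * (io x y * io x y))).

Lemma W_nn x y : (x < nx)%nat -> (y < ny)%nat -> 0 <= W x y.
Proof. intros. destruct (Hch x H) as [H1 _]. auto. Qed.
Lemma W_sum x : (x < nx)%nat -> fsum ny (W x) = 1.
Proof. intros. destruct (Hch x H) as [_ H1]. auto. Qed.
Lemma P_nn x : (x < nx)%nat -> 0 <= P x.
Proof. intros. destruct Hd as [H1 _]. auto. Qed.
Lemma P_sum : fsum nx P = 1.
Proof. destruct Hd as [_ H1]. auto. Qed.
Lemma PW_nn x y : (x < nx)%nat -> (y < ny)%nat -> 0 <= P x * W x y.
Proof. intros. apply Rmult_le_pos; [apply P_nn|apply W_nn]; auto. Qed.
Lemma Q_nn y : (y < ny)%nat -> 0 <= Q y.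
Proof. intros. unfold Q, WP. apply fsum_nonneg. intros; apply PW_nn; auto. Qed.
Lemma Q_ge x y : (x < nx)%nat -> (y < ny)%nat -> P x * W x y <= Q y.
Proof. intros. unfold Q, WP. apply (fsum_term_le nx (fun x => P x * W x y)); auto. intros; apply PW_nn; auto. Qed.
Lemma Q_pos x y : (x < nx)%nat -> (y < ny)%nat -> 0 < P x -> 0 < W x y -> 0 < Q y.
Proof. intros. pose proof (Q_ge x y H H0). nra. Qed.
Lemma Q_zero x y : (x < nx)%nat -> (y < ny)%nat -> Q y = 0 -> P x * W x y = 0.
Proof. intros. unfold Q, WP in H1. apply (fsum_zero_term nx (fun x => P x * W x y)); auto. intros; apply PW_nn; auto. Qed.
Lemma Q_sum : fsum ny Q = 1.
Proof. unfold Q, WP. rewrite <- fsum_swap. rewrite <- P_sum. apply fsum_ext. intros x Hx.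
 rewrite fsum_scal, W_sum; auto; ring. Qed.

Lemma post y f : (y < ny)%nat -> Q y * fsum nx (fun x => pi x y * f x) = fsum nx (fun x => P x * W x y * f x).
Proof. intros Hy. destruct (Req_dec (Q y) 0) as [H0|H0].
 - rewrite H0. rewrite (fsum_ext nx (fun x => P x * W x y * f x) (fun _ => 0)). { rewrite fsum_zero; ring. }
   intros x Hx. rewrite Q_zero; auto; ring.
 - rewrite <- fsum_scal. apply fsum_ext. intros x Hx. unfold pi. field. auto. Qed.

Lemma pi_sum y : (y < ny)%nat -> 0 < Q y -> fsum nx (fun x => pi x y) = 1.
Proof. intros Hy HQ. apply (Rmult_eq_reg_l (Q y)); [|lra].
 rewrite (fsum_ext nx (fun x => pi x y) (fun x => pi x y * 1)) by (intros; ring).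
 rewrite post by auto. rewrite Rmult_1_r. unfold Q, WP.
 apply fsum_ext; intros; ring. Qed.

Lemma pi_nn x y : (x < nx)%nat -> (y < ny)%nat -> 0 <= pi x y.
Proof. intros. unfold pi. unfold Rdiv. apply Rmult_le_pos. apply PW_nn; auto.
 destruct (Req_dec (Q y) 0) as [->|H1]. { rewrite Rinv_0; lra. } apply Rlt_le, Rinv_0_lt_compat.
 pose proof (Q_nn y H0); lra. Qed.

Lemma Xf_pos y s : (y < ny)%nat -> 0 < Q y -> 0 < Xf y s.
Proof. intros Hy HQ. unfold Q, WP in HQ. destruct (fsum_pos_ex _ _ HQ) as [x [Hx Hpos]].
 unfold Xf. eapply Rlt_le_trans; [|apply (fsum_term_le nx (fun x => pi x y * exp (rr s * io x y)) x); auto].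
 - apply Rmult_lt_0_compat; [|apply exp_pos]. unfold pi. apply Rdiv_lt_0_compat; auto.
 - intros; apply Rmult_le_pos; [apply pi_nn; auto| apply Rlt_le, exp_pos]. Qed.

Lemma rep_term y s : (y < ny)%nat -> 0 <= s ->
  rpow (fsum nx (fun x => P x * rpow (W x y) (1 / (1 + s)))) (1 + s) = Q y * exp ((1 + s) * ln (Xf y s)).
Proof. intros Hy Hs. destruct (Req_dec (Q y) 0) as [H0|H0].
 - rewrite H0, Rmult_0_l. rewrite (fsum_ext _ _ (fun _ => 0)).
   + rewrite fsum_zero. unfold rpow. destruct (Rlt_dec 0 0); [lra|auto].
   + intros x Hx. pose proof (Q_zero x y Hx Hy H0). unfold rpow. destruct (Rlt_dec 0 (W x y)).
     * assert (P x = 0) by (destruct (Rmult_integral _ _ H); [auto|lra]). rewrite H1; ring.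
     * ring.
 - assert (HQ : 0 < Q y) by (pose proof (Q_nn y Hy); lra).
   set (t := 1 / (1 + s)).
   assert (E : fsum nx (fun x => P x * rpow (W x y) t) = exp (t * ln (Q y)) * Xf y s).
   { unfold Xf. rewrite <- fsum_scal. apply fsum_ext. intros x Hx. unfold rpow, pi, io.
     destruct (Rlt_dec 0 (W x y)) as [HW|HW].
     + unfold Rpower.
       assert (Ex : t * ln (Q y) + (ln (W x y) + (- ln (Q y) + rr s * (ln (W x y) - ln (Q y)))) = t * ln (W x y))
         by (unfold t, rr; field; lra).
       rewrite <- Ex. rewrite !exp_plus. rewrite exp_Ropp, !exp_ln by auto. field. lra.
     + assert (W x y = 0) by (pose proof (W_nn x y Hx Hy); lra). rewrite H. unfold Rdiv. ring. }
   rewrite E. pose proof (Xf_pos y s Hy HQ). unfold rpow.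
   destruct (Rlt_dec 0 (exp (t * ln (Q y)) * Xf y s)) as [Hp|Hp]; [|exfalso; apply Hp; apply Rmult_lt_0_compat; auto; apply exp_pos].
   unfold Rpower. rewrite ln_mult by (auto; apply exp_pos). rewrite ln_exp.
   replace ((1 + s) * (t * ln (Q y) + ln (Xf y s))) with (ln (Q y) + (1 + s) * ln (Xf y s)) by (unfold t; field; lra).
   rewrite exp_plus, exp_ln; auto. Qed.

Lemma psi_rep s : 0 <= s -> psi nx ny P W s = ln (fsum ny (fun y => Q y * exp ((1 + s) * ln (Xf y s)))).
Proof. intros Hs. unfold psi. f_equal. apply fsum_ext. intros y Hy. apply rep_term; auto. Qed.

Lemma J_rr : J rr 0 (-1) 1.
Proof. unfold J. apply o2_cubic with 1 1; [lra|]. intros s Hs.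
 replace (rr s - 0 - -1 * s - 1 * (s * s)) with (- (s*s*s) / (1 + s)) by (unfold rr; field; lra).
 unfold Rdiv. rewrite Rabs_mult, Rabs_Ropp. rewrite (Rabs_right (s*s*s)) by (apply Rle_ge, Rmult_le_pos; nra).
 rewrite Rabs_right by (apply Rle_ge, Rlt_le, Rinv_0_lt_compat; lra).
 assert (/ (1+s) <= 1). { rewrite <- Rinv_1. apply Rinv_le_contravar; lra. }
 assert (0 <= s*s*s) by (apply Rmult_le_pos; nra). nra. Qed.

Lemma J_Xf y : (y < ny)%nat -> 0 < Q y -> J (Xf y) 1 (- mm y) (mm y + bb y / 2).
Proof. intros Hy HQ. unfold Xf.
 apply J_coef with (fsum nx (fun x => pi x y * exp 0)) (fsum nx (fun x => pi x y * (exp 0 * (io x y * -1))))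
   (fsum nx (fun x => pi x y * (exp 0 * (io x y * 1) + exp 0 / 2 * (io x y * -1 * (io x y * -1))))).
 - apply (J_fsum nx (fun x s => pi x y * exp (rr s * io x y))). intros x Hx.
   apply J_scal. apply (J_comp exp (fun s => rr s * io x y) 0 (io x y * -1) (io x y * 1)).
   + apply Tay_exp.
   + apply (J_coef (fun s => rr s * io x y) (io x y * 0) (io x y * -1) (io x y * 1)); [|ring|ring|ring].
     eapply J_fext; [apply Rlt_0_1| |apply (J_scal (io x y) rr _ _ _ J_rr)]. intros; simpl; ring.
 - rewrite exp_0. rewrite (fsum_ext _ _ (fun x => pi x y)) by (intros; ring). apply pi_sum; auto.
 - unfold mm. rewrite (fsum_ext _ _ (fun x => -1 * (pi x y * io x y))) by (intros; rewrite exp_0; ring).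
   rewrite fsum_scal; ring.
 - unfold mm, bb. rewrite (fsum_ext _ _ (fun x => pi x y * io x y + pi x y * (io x y * io x y) * / 2)) by (intros; rewrite exp_0; field).
   rewrite fsum_plus, fsum_scal_r. unfold Rdiv. ring. Qed.

Lemma J_term y : (y < ny)%nat -> J (fun s => Q y * exp ((1 + s) * ln (Xf y s))) (Q y) (Q y * - mm y) (Q y * (bb y / 2)).
Proof. intros Hy. destruct (Req_dec (Q y) 0) as [H0|H0].
 - rewrite H0. apply (J_coef _ 0 0 0); [|ring|ring|ring]. eapply J_fext; [apply Rlt_0_1| |apply J_const]. intros; simpl; ring.
 - assert (HQ : 0 < Q y) by (pose proof (Q_nn y Hy); lra).
   apply (J_coef _ (Q y * 1) (Q y * - mm y) (Q y * (bb y/2))); [apply J_scal | ring|ring|ring].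
   pose proof (J_comp ln _ _ _ _ _ _ (Tay_ln 1 Rlt_0_1) (J_Xf y Hy HQ)) as HL.
   assert (H1s : J (fun s => 1 + s) 1 1 0).
   { apply (J_coef _ (1+0) (0+1) (0+0)); [|ring|ring|ring]. apply (J_plus (fun _ => 1) (fun s => s)); [apply J_const|apply J_id]. }
   pose proof (J_mul _ _ _ _ _ _ _ _ H1s HL) as HM.
   pose proof (J_comp exp _ _ _ _ _ _ (Tay_exp _) HM) as HE.
   eapply J_coef; [apply HE| | |].
   + rewrite ln_1. rewrite Rmult_0_r. apply exp_0.
   + rewrite ln_1, Rmult_0_r, exp_0. rewrite Rinv_1. ring.
   + rewrite ln_1, Rmult_0_r, exp_0. rewrite Rinv_1. field. Qed.

Lemma J_T : J (fun s => fsum ny (fun y => Q y * exp ((1 + s) * ln (Xf y s)))) 1 (- Ii) (S2 / 2).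
Proof. eapply J_coef; [apply (J_fsum ny (fun y s => Q y * exp ((1 + s) * ln (Xf y s)))); intros; apply J_term; auto| | |].
 - apply Q_sum.
 - rewrite (fsum_ext _ _ (fun y => -1 * fsum nx (fun x => P x * W x y * io x y))).
   + rewrite fsum_scal; unfold Ii; ring.
   + intros y Hy. unfold mm. rewrite <- post by auto. ring.
 - rewrite (fsum_ext _ _ (fun y => fsum nx (fun x => P x * W x y * (io x y * io x y)) * / 2)).
   + rewrite fsum_scal_r; unfold S2, Rdiv; ring.
   + intros y Hy. unfold bb. rewrite <- post by auto. field. Qed.

Lemma J_psi : J (fun s => psi nx ny P W s) 0 (- Ii) ((S2 - Ii * Ii) / 2).
Proof. eapply J_fext with (d0 := 1) (f := fun s => ln (fsum ny (fun y => Q y * exp ((1 + s) * ln (Xf y s))))).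
 { lra. } { intros s Hs. rewrite psi_rep; auto. lra. }
 eapply J_coef; [apply (J_comp ln _ _ _ _ _ _ (Tay_ln 1 Rlt_0_1) J_T)| | |].
 - apply ln_1.
 - rewrite Rinv_1; ring.
 - rewrite Rinv_1; field. Qed.


Lemma exp_quad M u : 0 <= M -> -M <= u -> 1 + u + u*u / (4 + 2*M) <= exp u.
Proof. intros HM Hu. destruct (Rle_dec (-2) u) as [H2|H2].
 - assert (E : exp u = exp (u/2) * exp (u/2)) by (rewrite <- exp_plus; f_equal; field).
   pose proof (exp_ineq1_le (u/2)).
   assert ((1 + u/2) * (1 + u/2) <= exp (u/2) * exp (u/2)) by (apply Rmult_le_compat; lra).
   assert (u*u/(4+2*M) <= u*u/4).
   { unfold Rdiv. apply Rmult_le_compat_l; [nra|]. apply Rinv_le_contravar; lra. }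
   nra.
 - pose proof (exp_pos u).
   assert (u*u <= M * (-u)) by nra.
   assert (u*u/(4+2*M) <= M*(-u)/(4+2*M)) by (unfold Rdiv; apply Rmult_le_compat_r; [apply Rlt_le, Rinv_0_lt_compat; lra|lra]).
   assert (M*(-u)/(4+2*M) <= -u/2).
   { apply (Rmult_le_reg_r (4 + 2*M)); [lra|]. unfold Rdiv. rewrite Rmult_assoc, Rinv_l by lra. nra. }
   lra. Qed.

Lemma ln_le_l a b : 0 < a -> a <= b -> ln a <= ln b.
Proof. intros Ha Hab. destruct (Req_dec a b) as [->|H]; [lra|]. left. apply ln_increasing; lra. Qed.

Lemma exp_le_l a b : a <= b -> exp a <= exp b.
Proof. intros H. destruct (Req_dec a b) as [->|H1]; [lra|]. left. apply exp_increasing; lra. Qed.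

Definition Bd := fsum ny (fun y => fsum nx (fun x => Rabs (io x y))).
Definition Mx := 2 * Bd.
Definition kap := / (4 + 2 * Mx).
Definition th := exp (- Mx).
Definition vv y := fsum nx (fun x => pi x y * ((io x y - mm y) * (io x y - mm y))).

Lemma Bd_nn : 0 <= Bd.
Proof. unfold Bd. apply fsum_nonneg; intros; apply fsum_nonneg; intros; apply Rabs_pos. Qed.

Lemma io_bd x y : (x < nx)%nat -> (y < ny)%nat -> Rabs (io x y) <= Bd.
Proof. intros Hx Hy. unfold Bd.
 eapply Rle_trans; [|apply (fsum_term_le ny (fun y => fsum nx (fun x => Rabs (io x y))) y); auto].
 - apply (fsum_term_le nx (fun x => Rabs (io x y))); auto. intros; apply Rabs_pos.
 - intros; apply fsum_nonneg; intros; apply Rabs_pos. Qed.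

Lemma mm_bd y : (y < ny)%nat -> 0 < Q y -> Rabs (mm y) <= Bd.
Proof. intros Hy HQ. unfold mm. eapply Rle_trans; [apply fsum_abs|].
 apply Rle_trans with (fsum nx (fun x => pi x y * Bd)).
 - apply fsum_le. intros x Hx. rewrite Rabs_mult, (Rabs_right (pi x y)) by (apply Rle_ge, pi_nn; auto).
   apply Rmult_le_compat_l; [apply pi_nn; auto| apply io_bd; auto].
 - rewrite fsum_scal_r, pi_sum; auto; lra. Qed.

Lemma Ii_Qmm : Ii = fsum ny (fun y => Q y * mm y).
Proof. unfold Ii. apply fsum_ext. intros y Hy. unfold mm. rewrite post; auto. Qed.

Lemma Ii_bd : Rabs Ii <= Bd.
Proof. rewrite Ii_Qmm. eapply Rle_trans; [apply fsum_abs|].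
 apply Rle_trans with (fsum ny (fun y => Q y * Bd)).
 - apply fsum_le. intros y Hy. rewrite Rabs_mult, (Rabs_right (Q y)) by (apply Rle_ge, Q_nn; auto).
   destruct (Req_dec (Q y) 0) as [->|H0]; [lra|]. pose proof (Q_nn y Hy).
   apply Rmult_le_compat_l; [lra|apply mm_bd; auto; lra].
 - rewrite fsum_scal_r, Q_sum; lra. Qed.

Lemma rr_bd s : 0 <= s -> -1 <= rr s <= 0.
Proof. intros Hs. unfold rr. split.
 - apply (Rmult_le_reg_r (1 + s)); [lra|]. unfold Rdiv. rewrite Rmult_assoc, Rinv_l by lra. lra.
 - unfold Rdiv. assert (0 < / (1+s)) by (apply Rinv_0_lt_compat; lra). nra. Qed.

Lemma rr_sq s : 0 <= s <= 1 -> s * s / 4 <= rr s * rr s.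
Proof. intros Hs. unfold rr. replace (- s / (1 + s) * (- s / (1 + s))) with (s * s / ((1+s)*(1+s))) by (field; lra).
 unfold Rdiv. apply Rmult_le_compat_l; [nra|]. apply Rinv_le_contravar; nra. Qed.

Lemma kap_pos : 0 < kap.
Proof. unfold kap, Mx. pose proof Bd_nn. apply Rinv_0_lt_compat; lra. Qed.

Lemma vv_nn y : (y < ny)%nat -> 0 <= vv y.
Proof. intros. unfold vv. apply fsum_nonneg. intros. apply Rmult_le_pos; [apply pi_nn; auto|apply Rle_0_sqr]. Qed.

Lemma Xf_lower y s : (y < ny)%nat -> 0 < Q y -> 0 <= s <= 1 ->
  exp (rr s * mm y) * (1 + kap * (rr s * rr s) * vv y) <= Xf y s.
Proof. intros Hy HQ Hs. pose proof (rr_bd s ltac:(lra)) as Hr.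
 apply Rle_trans with (fsum nx (fun x => exp (rr s * mm y) * (pi x y * (1 + rr s * (io x y - mm y)
     + kap * ((rr s * (io x y - mm y)) * (rr s * (io x y - mm y))))))).
 - right. rewrite fsum_scal. f_equal.
   rewrite (fsum_ext _ _ (fun x => (pi x y + rr s * (pi x y * io x y)) + (- (rr s * mm y)) * pi x y
        + (kap * (rr s * rr s)) * (pi x y * ((io x y - mm y) * (io x y - mm y))))) by (intros; ring).
   rewrite !fsum_plus, !fsum_scal. fold (mm y) (vv y). rewrite pi_sum by auto.
   unfold mm. ring.
 - unfold Xf. apply fsum_le. intros x Hx.
   set (u := rr s * (io x y - mm y)).
   assert (Hu : - Mx <= u).
   { pose proof (io_bd x y Hx Hy). pose proof (mm_bd y Hy HQ).
     assert (Rabs u <= Mx).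
     { unfold u, Mx. rewrite Rabs_mult. pose proof (Rabs_pos (io x y - mm y)).
       assert (Rabs (rr s) <= 1) by (apply Rabs_le; lra).
       assert (Rabs (io x y - mm y) <= 2 * Bd) by (unfold Rminus; eapply Rle_trans; [apply Rabs_triang|]; rewrite Rabs_Ropp; lra).
       pose proof (Rabs_pos (rr s)). nra. }
     pose proof (Rle_abs (-u)). rewrite Rabs_Ropp in H2. lra. }
   pose proof (exp_quad Mx u ltac:(unfold Mx; pose proof Bd_nn; lra) Hu).
   replace (exp (rr s * io x y)) with (exp (rr s * mm y) * exp u) by (unfold u; rewrite <- exp_plus; f_equal; ring).
   replace (u * u / (4 + 2 * Mx)) with (kap * (u*u)) in H by (unfold kap; field; unfold Mx; pose proof Bd_nn; lra).
   pose proof (exp_pos (rr s * mm y)). pose proof (pi_nn x y Hx Hy).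
   assert (pi x y * (1 + u + kap * (u * u)) <= pi x y * exp u) by (apply Rmult_le_compat_l; lra).
   nra. Qed.

Lemma term_lower y s : (y < ny)%nat -> 0 <= s <= 1 ->
  Q y * (exp (- s * mm y) * (1 + kap * (rr s * rr s) * vv y)) <= Q y * exp ((1 + s) * ln (Xf y s)).
Proof. intros Hy Hs. destruct (Req_dec (Q y) 0) as [->|H0]; [lra|].
 assert (HQ : 0 < Q y) by (pose proof (Q_nn y Hy); lra).
 apply Rmult_le_compat_l; [lra|].
 set (z := kap * (rr s * rr s) * vv y).
 assert (Hz : 0 <= z) by (unfold z; apply Rmult_le_pos; [apply Rmult_le_pos; [apply Rlt_le, kap_pos|nra]|apply vv_nn; auto]).
 pose proof (Xf_lower y s Hy HQ Hs) as HX. fold z in HX.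
 assert (H1 : rr s * mm y + ln (1 + z) <= ln (Xf y s)).
 { rewrite <- (ln_exp (rr s * mm y)). rewrite <- ln_mult by (try apply exp_pos; lra).
   apply ln_le_l; auto. apply Rmult_lt_0_compat; [apply exp_pos|lra]. }
 assert (H2 : 0 <= ln (1 + z)) by (rewrite <- ln_1; apply ln_le_l; lra).
 assert (H3 : - s * mm y + ln (1 + z) <= (1 + s) * ln (Xf y s)).
 { replace (- s * mm y) with ((1 + s) * (rr s * mm y)) by (unfold rr; field; lra).
   assert ((1+s) * (rr s * mm y + ln (1+z)) <= (1+s) * ln (Xf y s)) by (apply Rmult_le_compat_l; lra).
   nra. }
 apply exp_le_l in H3. rewrite exp_plus, exp_ln in H3 by lra. exact H3. Qed.

Lemma term_lower2 y s : (y < ny)%nat -> 0 <= s <= 1 ->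
  exp (- s * Ii) * (Q y + (- s) * (Q y * mm y - Ii * Q y) + kap * (s * s) * (Q y * ((mm y - Ii) * (mm y - Ii)))
      + th * kap * (rr s * rr s) * (Q y * vv y))
  <= Q y * exp ((1 + s) * ln (Xf y s)).
Proof. intros Hy Hs. eapply Rle_trans; [|apply term_lower; auto].
 destruct (Req_dec (Q y) 0) as [->|H0]. { right. ring. }
 assert (HQ : 0 < Q y) by (pose proof (Q_nn y Hy); lra).
 set (w := - s * (mm y - Ii)).
 assert (Hw : - Mx <= w).
 { pose proof (mm_bd y Hy HQ). pose proof Ii_bd.
   assert (Rabs w <= Mx).
   { unfold w, Mx. rewrite Rabs_mult. rewrite Rabs_Ropp, (Rabs_right s) by lra.
     assert (Rabs (mm y - Ii) <= 2 * Bd) by (unfold Rminus; eapply Rle_trans; [apply Rabs_triang|]; rewrite Rabs_Ropp; lra).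
     pose proof (Rabs_pos (mm y - Ii)). nra. }
   pose proof (Rle_abs (-w)). rewrite Rabs_Ropp in H3. lra. }
 pose proof (exp_quad Mx w ltac:(unfold Mx; pose proof Bd_nn; lra) Hw) as Ew.
 replace (w * w / (4 + 2 * Mx)) with (kap * (w*w)) in Ew by (unfold kap; field; unfold Mx; pose proof Bd_nn; lra).
 assert (Eth : th <= exp w) by (unfold th; apply exp_le_l; lra).
 replace (exp (- s * mm y)) with (exp (- s * Ii) * exp w) by (unfold w; rewrite <- exp_plus; f_equal; ring).
 set (z := kap * (rr s * rr s) * vv y).
 assert (Hz : 0 <= z) by (unfold z; apply Rmult_le_pos; [apply Rmult_le_pos; [apply Rlt_le, kap_pos|nra]|apply vv_nn; auto]).
 pose proof (exp_pos (- s * Ii)) as He.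
 replace (exp (- s * Ii) * (Q y + - s * (Q y * mm y - Ii * Q y) + kap * (s * s) * (Q y * ((mm y - Ii) * (mm y - Ii))) + th * kap * (rr s * rr s) * (Q y * vv y)))
   with (exp (- s * Ii) * Q y * ((1 + w + kap * (w*w)) + th * z)) by (unfold w, z; ring).
 replace (Q y * (exp (- s * Ii) * exp w * (1 + z))) with (exp (- s * Ii) * Q y * (exp w + exp w * z)) by ring.
 apply Rmult_le_compat_l; [nra|].
 assert (th * z <= exp w * z) by (apply Rmult_le_compat_r; lra). lra. Qed.

Lemma AB : fsum ny (fun y => Q y * ((mm y - Ii) * (mm y - Ii))) + fsum ny (fun y => Q y * vv y) = S2 - Ii * Ii.
Proof. rewrite <- fsum_plus.
 rewrite (fsum_ext _ _ (fun y => fsum nx (fun x => P x * W x y * (io x y * io x y)) + (-2 * Ii) * (Q y * mm y) + (Ii * Ii) * Q y)).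
 - rewrite !fsum_plus, !fsum_scal. rewrite <- Ii_Qmm, Q_sum. unfold S2. ring.
 - intros y Hy. rewrite <- post by auto. fold (bb y).
   destruct (Req_dec (Q y) 0) as [->|H0]; [ring|].
   assert (HQ : 0 < Q y) by (pose proof (Q_nn y Hy); lra).
   assert (Q y * vv y = Q y * bb y - Q y * (mm y * mm y)).
   { unfold vv. rewrite (fsum_ext _ _ (fun x => pi x y * (io x y * io x y) + (-2 * mm y) * (pi x y * io x y) + (mm y * mm y) * pi x y)) by (intros; ring).
     rewrite !fsum_plus, !fsum_scal, pi_sum by auto. fold (bb y) (mm y). ring. }
   rewrite H. ring. Qed.

Definition kk := kap * th / 4.
Lemma kk_pos : 0 < kk.
Proof. unfold kk. pose proof kap_pos. pose proof (exp_pos (- Mx)). unfold th. apply Rmult_lt_0_compat; [|lra]. nra. Qed.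

Lemma A_nn : 0 <= fsum ny (fun y => Q y * ((mm y - Ii) * (mm y - Ii))).
Proof. apply fsum_nonneg. intros. apply Rmult_le_pos; [apply Q_nn; auto|apply Rle_0_sqr]. Qed.
Lemma B_nn : 0 <= fsum ny (fun y => Q y * vv y).
Proof. apply fsum_nonneg. intros. apply Rmult_le_pos; [apply Q_nn; auto|apply vv_nn; auto]. Qed.
Lemma U_nn : 0 <= S2 - Ii * Ii.
Proof. rewrite <- AB. pose proof A_nn; pose proof B_nn; lra. Qed.

Lemma T_lower s : 0 <= s <= 1 ->
  exp (- s * Ii) * (1 + kk * (s * s) * (S2 - Ii * Ii)) <= fsum ny (fun y => Q y * exp ((1 + s) * ln (Xf y s))).
Proof. intros Hs. eapply Rle_trans; [|apply fsum_le; intros y Hy; apply term_lower2; auto].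
 rewrite fsum_scal. apply Rmult_le_compat_l; [apply Rlt_le, exp_pos|].
 rewrite !fsum_plus, !fsum_scal, fsum_minus, (fsum_scal ny Ii Q). rewrite <- Ii_Qmm, Q_sum.
 rewrite <- AB. pose proof A_nn; pose proof B_nn.
 set (A := fsum ny (fun y => Q y * ((mm y - Ii) * (mm y - Ii)))).
 set (B := fsum ny (fun y => Q y * vv y)).
 pose proof (rr_sq s Hs). pose proof kap_pos.
 assert (th <= 1) by (unfold th; rewrite <- exp_0; apply exp_le_l; unfold Mx; pose proof Bd_nn; lra).
 assert (0 < th) by apply exp_pos.
 unfold kk.
 assert (kap * th / 4 * (s * s) * A <= kap * (s*s) * A).
 { assert (0 <= kap * (s*s*A)) by (apply Rmult_le_pos; [lra|apply Rmult_le_pos; [apply Rle_0_sqr|assumption]]).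
   replace (kap * th / 4 * (s * s) * A) with ((kap * (s*s*A)) * (th/4)) by field.
   replace (kap * (s * s) * A) with ((kap * (s*s*A)) * 1) by ring.
   apply Rmult_le_compat_l; lra. }
 assert (kap * th / 4 * (s * s) * B <= th * kap * (rr s * rr s) * B).
 { assert (0 <= kap * th * B) by (apply Rmult_le_pos; [apply Rmult_le_pos; lra|assumption]).
   replace (kap * th / 4 * (s * s) * B) with ((kap * th * B) * (s*s/4)) by field.
   replace (th * kap * (rr s * rr s) * B) with ((kap * th * B) * (rr s * rr s)) by ring.
   apply Rmult_le_compat_l; lra. }
 lra. Qed.

Lemma psi_lower s : 0 <= s <= 1 -> ln (1 + kk * (s * s) * (S2 - Ii * Ii)) <= Ii * s + psi nx ny P W s.
Proof. intros Hs. rewrite psi_rep by lra. pose proof (T_lower s Hs).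
 assert (0 <= kk * (s*s) * (S2 - Ii*Ii)) by (apply Rmult_le_pos; [apply Rmult_le_pos; [apply Rlt_le, kk_pos|nra]|apply U_nn]).
 apply ln_le_l in H; [|apply Rmult_lt_0_compat; [apply exp_pos|lra]].
 rewrite ln_mult, ln_exp in H by (try apply exp_pos; lra). lra. Qed.

Definition DD x := fsum ny (fun y => W x y * io x y).

Lemma ln_div_l a b : 0 < a -> 0 < b -> ln (a / b) = ln a - ln b.
Proof. intros. unfold Rdiv. rewrite ln_mult, ln_Rinv by (auto; apply Rinv_0_lt_compat; auto). ring. Qed.

Lemma Dx_DD x : (x < nx)%nat -> 0 < P x -> Defs.Dx nx ny P W x = DD x.
Proof. intros Hx HP. unfold Defs.Dx, DD. apply fsum_ext. intros y Hy.
 destruct (Rlt_dec 0 (W x y)) as [HW|HW].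
 - rewrite ln_div_l by (auto; apply (Q_pos x y); auto). unfold io, Q. ring.
 - assert (W x y = 0) by (pose proof (W_nn x y Hx Hy); lra). rewrite H; ring. Qed.

Lemma sum_PDD : fsum nx (fun x => P x * DD x) = Ii.
Proof. unfold DD, Ii. rewrite <- fsum_swap. apply fsum_ext. intros x Hx. rewrite <- fsum_scal. apply fsum_ext; intros; ring. Qed.

Lemma MI_Ii : MI nx ny P W = Ii.
Proof. rewrite <- sum_PDD. unfold MI. apply fsum_ext. intros x Hx.
 destruct (Rlt_dec 0 (P x)) as [HP|HP].
 - rewrite Dx_DD; auto.
 - assert (P x = 0) by (pose proof (P_nn x Hx); lra). rewrite H; ring. Qed.

Lemma MI_gen (Pd : nat -> R) : (forall i, (i < nx)%nat -> 0 <= Pd i) ->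
  MI nx ny Pd W = fsum nx (fun x => Pd x * Defs.Dx nx ny Pd W x).
Proof. intros H. unfold MI. apply fsum_ext. intros x Hx. destruct (Rlt_dec 0 (Pd x)); auto.
 assert (Pd x = 0) by (pose proof (H x Hx); lra). rewrite H0; ring. Qed.

Lemma WP_sum (Pd : nat -> R) : fsum ny (fun y => WP nx Pd W y) = fsum nx Pd.
Proof. unfold WP. rewrite <- fsum_swap. apply fsum_ext. intros x Hx.
 rewrite fsum_scal, W_sum; auto; ring. Qed.

Lemma per_y a b : 0 <= a -> 0 <= b -> (b = 0 -> a = 0) -> a * (ln a - ln b) <= (a - b) * (a - b) / b + (a - b).
Proof. intros Ha Hb Hab. destruct (Req_dec b 0) as [Hb0|Hb0].
 - rewrite Hab by auto. rewrite Hb0. unfold Rdiv. right. ring.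
 - destruct (Req_dec a 0) as [Ha0|Ha0].
   + rewrite Ha0. right. field. auto.
   + rewrite <- ln_div_l by lra. pose proof (exp_ineq1_le (ln (a / b))). rewrite exp_ln in H by (apply Rdiv_lt_0_compat; lra).
     replace ((a - b) * (a - b) / b + (a - b)) with (a * (a / b - 1)) by (field; auto).
     apply Rmult_le_compat_l; lra. Qed.

Lemma KKT_gen (Qd : nat -> R) (M : R) : 0 <= M -> (forall z, (z < nx)%nat -> 0 <= Qd z) ->
  (forall z, (z < nx)%nat -> Qd z <= M * P z) -> fsum nx Qd = 1 ->
  fsum nx (fun z => Qd z * DD z) - fsum ny (fun y => (WP nx Qd W y - Q y) * (WP nx Qd W y - Q y) / Q y)
  <= MI nx ny Qd W.
Proof. intros HM Hnn Hle Hs. rewrite MI_gen by auto.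
 set (WQ := fun y => WP nx Qd W y). set (lr := fun y => ln (WQ y) - ln (Q y)).
 assert (WQge : forall z y, (z < nx)%nat -> (y < ny)%nat -> Qd z * W z y <= WQ y).
 { intros z y Hz Hy. unfold WQ, WP. apply (fsum_term_le nx (fun z => Qd z * W z y)); auto.
   intros; apply Rmult_le_pos; [auto|apply W_nn; auto]. }
 assert (S1 : fsum nx (fun z => Qd z * Defs.Dx nx ny Qd W z) =
   fsum nx (fun z => Qd z * DD z) - fsum ny (fun y => WQ y * lr y)).
 { rewrite (fsum_ext _ _ (fun z => Qd z * DD z - Qd z * fsum ny (fun y => W z y * lr y))).
   - rewrite fsum_minus. f_equal.
     rewrite (fsum_ext _ _ (fun z => fsum ny (fun y => Qd z * W z y * lr y))) by (intros; rewrite <- fsum_scal; apply fsum_ext; intros; ring).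
     rewrite fsum_swap. apply fsum_ext. intros y Hy. rewrite fsum_scal_r. reflexivity.
   - intros z Hz. destruct (Req_dec (Qd z) 0) as [H0|H0]. { rewrite H0; ring. }
     assert (HQz : 0 < Qd z) by (pose proof (Hnn z Hz); lra).
     assert (HPz : 0 < P z). { destruct (Rlt_dec 0 (P z)); auto. pose proof (P_nn z Hz). pose proof (Hle z Hz).
       assert (P z = 0) by lra. rewrite H2 in H1. lra. }
     rewrite <- Rmult_minus_distr_l. f_equal. unfold Defs.Dx, DD. rewrite <- fsum_minus. apply fsum_ext. intros y Hy.
     destruct (Rlt_dec 0 (W z y)) as [HW|HW].
     + fold (WQ y). assert (0 < WQ y) by (pose proof (WQge z y Hz Hy); nra).
       rewrite ln_div_l by auto. unfold lr, io. ring.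
     + assert (W z y = 0) by (pose proof (W_nn z y Hz Hy); lra). rewrite H; ring. }
 assert (S2' : fsum ny (fun y => WQ y * lr y) <= fsum ny (fun y => (WQ y - Q y) * (WQ y - Q y) / Q y)).
 { apply Rle_trans with (fsum ny (fun y => (WQ y - Q y) * (WQ y - Q y) / Q y + (WQ y - Q y))).
   - apply fsum_le. intros y Hy. apply per_y.
     + unfold WQ, WP. apply fsum_nonneg; intros; apply Rmult_le_pos; [auto|apply W_nn; auto].
     + apply Q_nn; auto.
     + intros HQ0. assert (WQ y <= M * Q y).
       { unfold WQ, WP, Q, WP. rewrite <- fsum_scal. apply fsum_le. intros z Hz.
         pose proof (W_nn z y Hz Hy). pose proof (Hle z Hz).
         replace (M * (P z * W z y)) with ((M * P z) * W z y) by ring. apply Rmult_le_compat_r; auto. }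
       assert (0 <= WQ y) by (unfold WQ, WP; apply fsum_nonneg; intros; apply Rmult_le_pos; [auto|apply W_nn; auto]).
       rewrite HQ0 in H. lra.
   - rewrite fsum_plus, fsum_minus. unfold WQ. rewrite WP_sum. fold WQ. rewrite Q_sum, Hs. lra. }
 rewrite S1. unfold WQ in *. lra. Qed.

Lemma small_lam a K lam0 : 0 < lam0 -> (forall lam, 0 < lam <= lam0 -> lam * a <= lam * lam * K) -> a <= 0.
Proof. intros Hl H. destruct (Rle_dec a 0) as [|Ha]; auto. exfalso.
 set (lam := Rmin lam0 (a / (Rabs K + 1))).
 assert (Hpos : 0 < lam) by (apply Rmin_pos; auto; apply Rdiv_lt_0_compat; pose proof (Rabs_pos K); lra).
 assert (H1 : lam <= a / (Rabs K + 1)) by apply Rmin_r.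
 specialize (H lam (conj Hpos (Rmin_l _ _))).
 assert (a <= lam * K) by (apply (Rmult_le_reg_l lam); auto; lra).
 pose proof (Rle_abs K). pose proof (Rabs_pos K).
 assert (lam * (Rabs K + 1) <= a). { apply (Rmult_le_compat_r (Rabs K + 1)) in H1; [|lra].
   replace (a / (Rabs K + 1) * (Rabs K + 1)) with a in H1 by (field; lra). lra. }
 nra. Qed.

Lemma dir_lemma (d : nat -> R) (lam0 M C : R) : 0 < lam0 -> 0 <= M -> fsum nx d = 0 ->
  (forall lam, 0 < lam <= lam0 -> forall z, (z < nx)%nat -> 0 <= P z + lam * d z /\ P z + lam * d z <= M * P z) ->
  is_capacity nx ny W C -> MI nx ny P W = C -> fsum nx (fun z => d z * DD z) <= 0.
Proof. intros Hl0 HM Hd0 Hcond Hcap HMI.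
 set (Wd := fun y => fsum nx (fun z => d z * W z y)).
 apply (small_lam _ (fsum ny (fun y => Wd y * Wd y / Q y)) lam0); auto.
 intros lam Hlam. set (Qd := fun z => P z + lam * d z).
 assert (Hdist : is_distr nx Qd).
 { split. - intros i Hi. apply (Hcond lam Hlam i Hi).
   - unfold Qd. rewrite fsum_plus, fsum_scal, Hd0, P_sum. ring. }
 assert (Hup : MI nx ny Qd W <= C).
 { destruct Hcap as [Hub _]. apply Hub. exists Qd. split; auto. }
 pose proof (KKT_gen Qd M HM (fun z Hz => proj1 (Hcond lam Hlam z Hz)) (fun z Hz => proj2 (Hcond lam Hlam z Hz)) (proj2 Hdist)) as HK.
 assert (E1 : fsum nx (fun z => Qd z * DD z) = Ii + lam * fsum nx (fun z => d z * DD z)).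
 { unfold Qd. rewrite (fsum_ext _ _ (fun z => P z * DD z + lam * (d z * DD z))) by (intros; ring).
   rewrite fsum_plus, fsum_scal, sum_PDD. ring. }
 assert (E2 : fsum ny (fun y => (WP nx Qd W y - Q y) * (WP nx Qd W y - Q y) / Q y) = lam * lam * fsum ny (fun y => Wd y * Wd y / Q y)).
 { rewrite <- fsum_scal. apply fsum_ext. intros y Hy.
   assert (WP nx Qd W y - Q y = lam * Wd y).
   { unfold WP, Qd, Q, WP, Wd. rewrite <- fsum_scal, <- fsum_minus. apply fsum_ext; intros; ring. }
   rewrite H. unfold Rdiv. ring. }
 rewrite E1, E2 in HK. rewrite MI_Ii in HMI. subst C. lra. Qed.

Lemma fsum_ex x : (x < nx)%nat -> fsum nx (ex x) = 1.
Proof. intros. rewrite (fsum_ext _ _ (fun z => ex x z * 1)) by (intros; ring). apply fsum_delta; auto. Qed.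

Lemma ex_01 x z : ex x z = 0 \/ ex x z = 1.
Proof. unfold ex. destruct (Nat.eq_dec z x); auto. Qed.

Lemma P_le1 x : (x < nx)%nat -> P x <= 1.
Proof. intros. rewrite <- P_sum. apply fsum_term_le; auto. intros; apply P_nn; auto. Qed.

Lemma KKT C x : is_capacity nx ny W C -> MI nx ny P W = C -> (x < nx)%nat -> 0 < P x -> DD x = Ii.
Proof. intros Hcap HMI Hx HPx.
 assert (H1 : fsum nx (fun z => (ex x z - P z) * DD z) <= 0).
 { apply (dir_lemma _ 1 (1 + / P x) C); auto. { lra. } { pose proof (Rinv_0_lt_compat _ HPx); lra. }
   { rewrite fsum_minus, fsum_ex, P_sum; auto. ring. }
   intros lam Hlam z Hz. pose proof (P_nn z Hz). pose proof (Rinv_0_lt_compat _ HPx). split.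
   - destruct (ex_01 x z) as [E|E]; rewrite E; nra.
   - unfold ex. destruct (Nat.eq_dec z x) as [->|Hne].
     + replace ((1 + / P x) * P x) with (P x + 1) by (field; lra). nra.
     + assert (0 <= / P x * P z) by nra. nra. }
 assert (H2 : fsum nx (fun z => (P z - ex x z) * DD z) <= 0).
 { apply (dir_lemma _ (P x) 2 C); auto. { lra. } { rewrite fsum_minus, fsum_ex, P_sum; auto. ring. }
   intros lam Hlam z Hz. pose proof (P_nn z Hz). pose proof (P_le1 x Hx). split.
   - unfold ex. destruct (Nat.eq_dec z x) as [->|Hne]; nra.
   - unfold ex. destruct (Nat.eq_dec z x) as [->|Hne]; nra. }
 rewrite (fsum_ext _ _ (fun z => ex x z * DD z - P z * DD z)) in H1 by (intros; ring).
 rewrite (fsum_ext _ _ (fun z => P z * DD z - ex x z * DD z)) in H2 by (intros; ring).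
 rewrite fsum_minus, fsum_delta, sum_PDD in H1, H2 by auto. lra. Qed.

Lemma Vdisp_eq C : is_capacity nx ny W C -> MI nx ny P W = C -> Vdisp nx ny P W = S2 - Ii * Ii.
Proof. intros Hcap HMI. unfold Vdisp.
 rewrite (fsum_ext _ _ (fun x => fsum ny (fun y => P x * W x y * (io x y * io x y)) + (-2 * Ii) * fsum ny (fun y => P x * W x y * io x y)
     + (Ii * Ii) * fsum ny (fun y => P x * W x y))).
 - rewrite !fsum_plus, !fsum_scal. rewrite !(fsum_swap nx ny). fold S2 Ii.
   rewrite (fsum_ext ny _ Q) by (intros; unfold Q, WP; reflexivity). rewrite Q_sum. ring.
 - intros x Hx. destruct (Rlt_dec 0 (P x)) as [HP|HP].
   + rewrite Dx_DD, (KKT C x) by auto. rewrite <- !fsum_scal, <- !fsum_plus. apply fsum_ext. intros y Hy.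
     destruct (Rlt_dec 0 (W x y)) as [HW|HW].
     * rewrite ln_div_l by (auto; apply (Q_pos x y); auto). fold (Q y). unfold io. ring.
     * assert (W x y = 0) by (pose proof (W_nn x y Hx Hy); lra). rewrite H; ring.
   + assert (P x = 0) by (pose proof (P_nn x Hx); lra).
     rewrite (fsum_ext ny _ (fun _ => 0)) by (intros; rewrite H; ring).
     rewrite (fsum_ext ny (fun y => P x * W x y * io x y) (fun _ => 0)) by (intros; rewrite H; ring).
     rewrite (fsum_ext ny (fun y => P x * W x y) (fun _ => 0)) by (intros; rewrite H; ring).
     rewrite !fsum_zero. ring. Qed.
End Info.

Lemma is_min_on_ext f1 f2 a b m : (forall s, f1 s = f2 s) -> is_min_on f1 a b m -> is_min_on f2 a b m.
Proof. intros H [[s [Hs E]] H2]. split. - exists s. rewrite <- H. auto. - intros s' Hs'. rewrite <- H. auto. Qed.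

Lemma ln_le_l_aux a b : 0 < a -> a <= b -> ln a <= ln b.
Proof. intros Ha Hab. destruct (Req_dec a b) as [->|H]; [lra|]. left. apply ln_increasing; lra. Qed.

Lemma quad_lower A B t : 0 < A -> - (B*B) / (4*A) <= A*(t*t) + B*t.
Proof. intros HA. apply (Rmult_le_reg_r (4*A)); [lra|].
 replace (- (B*B) / (4*A) * (4*A)) with (- (B*B)) by (field; lra).
 assert (0 <= (2*A*t + B)*(2*A*t + B)) by apply Rle_0_sqr. nra. Qed.

Lemma limit_core (g : R -> R) (V R2 kk' : R) (m : nat -> R) :
  0 < V -> R2 < 0 -> 0 < kk' -> J g 0 0 (V/2) ->
  (forall s, 0 <= s <= 1 -> ln (1 + kk' * (s*s) * V) <= g s) ->
  (forall n, (0 < n)%nat -> is_min_on (fun s => g s + R2 / sqrt (INR n) * s) 0 1 (m n)) ->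
  Un_cv (fun n => INR n * m n) (- R2^2/(2*V)).
Proof. intros HV HR Hk HJ Hlow Hmin eps Heps.
 set (c := - R2 / V). assert (Hc : 0 < c) by (unfold c; apply Rdiv_lt_0_compat; lra).
 set (L := - R2^2/(2*V)).
 assert (HL : L < 0). { unfold L. apply Rdiv_neg_pos; [|lra]. assert (0 < R2^2) by (simpl; nra). lra. }
 set (e := Rmin (V/4) (eps*V*V/(4*(R2*R2)))).
 assert (He : 0 < e). { apply Rmin_pos; [lra|]. apply Rdiv_lt_0_compat; [|nra]. apply Rmult_lt_0_compat; nra. }
 assert (He1 : e <= V/4) by apply Rmin_l.
 assert (He2 : e <= eps*V*V/(4*(R2*R2))) by apply Rmin_r.
 destruct (HJ e He) as [del [Hdel Bg]].
 set (d := Rmin del 1). assert (Hd : 0 < d) by (apply Rmin_pos; lra).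
 assert (Hd1 : d <= 1) by apply Rmin_r. assert (Hd2 : d <= del) by apply Rmin_l.
 set (eta := ln (1 + kk' * (d*d) * V)).
 assert (Heta : 0 < eta). { unfold eta. rewrite <- ln_1. apply ln_increasing; [lra|].
   assert (0 < kk' * (d*d) * V) by (apply Rmult_lt_0_compat; [apply Rmult_lt_0_compat; nra|lra]). lra. }
 assert (Hbig : forall s, d <= s <= 1 -> eta <= g s).
 { intros s Hs. eapply Rle_trans; [|apply Hlow; lra]. unfold eta.
   apply ln_le_l_aux.
   - assert (0 < kk' * (d*d) * V) by (apply Rmult_lt_0_compat; [apply Rmult_lt_0_compat; nra|lra]). lra.
   - assert (d*d <= s*s) by nra. assert (kk' * (d*d) <= kk' * (s*s)) by (apply Rmult_le_compat_l; lra).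
     assert (kk' * (d*d) * V <= kk' * (s*s) * V) by (apply Rmult_le_compat_r; lra). lra. }
 set (K := c / d + (- R2) / eta + 1).
 assert (HK1 : c / d < K). { unfold K. assert (0 < - R2 / eta) by (apply Rdiv_lt_0_compat; lra). lra. }
 assert (HK2 : - R2 / eta < K). { unfold K. assert (0 < c / d) by (apply Rdiv_lt_0_compat; lra). lra. }
 destruct (INR_unbounded (K * K)) as [N HN].
 exists (S N). intros n Hn.
 assert (Hn0 : (0 < n)%nat) by lia.
 assert (HnR : K * K < INR n) by (apply Rlt_le_trans with (INR N); [lra|apply le_INR; lia]).
 set (sq := sqrt (INR n)).
 assert (HK0 : 0 < K) by (assert (0 < c/d) by (apply Rdiv_lt_0_compat; lra); lra).
 assert (Hsq : K < sq). { unfold sq. rewrite <- (sqrt_square K) by lra. apply sqrt_lt_1; nra. }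
 assert (Hsq2 : sq * sq = INR n) by (unfold sq; apply sqrt_sqrt; apply pos_INR).
 assert (Hsq0 : 0 < sq) by lra.
 destruct (Hmin n Hn0) as [[s0 [Hs0 Es0]] Hall]. fold sq in Es0, Hall.
 assert (Up : INR n * m n <= L + eps / 2).
 { set (h := c / sq).
   assert (Hh0 : 0 < h) by (unfold h; apply Rdiv_lt_0_compat; lra).
   assert (Hhd : h < d). { unfold h. apply (Rmult_lt_reg_r sq); auto. unfold Rdiv. rewrite Rmult_assoc, Rinv_l by lra.
     assert (c / d < sq) by lra. apply (Rmult_lt_compat_r d) in H; [|lra]. unfold Rdiv in H. rewrite Rmult_assoc, Rinv_l in H by lra. lra. }
   specialize (Hall h ltac:(lra)).
   specialize (Bg h ltac:(lra)). 
   assert (Hgh : g h <= (V/2 + e) * (h*h)). { pose proof (Rle_abs (g h - 0 - 0 * h - V / 2 * (h * h))). lra. }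
   assert (Hm : m n <= (V/2 + e) * (h*h) + R2 / sq * h) by lra.
   assert (H1 : INR n * m n <= INR n * ((V/2 + e) * (h*h) + R2 / sq * h)) by (apply Rmult_le_compat_l; [apply pos_INR|lra]).
   replace (INR n * ((V / 2 + e) * (h * h) + R2 / sq * h)) with ((V/2 + e) * (c*c) + R2 * c) in H1
     by (rewrite <- Hsq2; unfold h; field; lra).
   assert (e * (c*c) <= eps / 4).
   { unfold c. replace (e * (- R2 / V * (- R2 / V))) with (e * (R2*R2) / (V*V)) by (field; lra).
     apply (Rmult_le_reg_r (V*V)); [nra|]. unfold Rdiv. rewrite Rmult_assoc, Rinv_l by nra.
     apply (Rmult_le_compat_r (R2*R2)) in He2; [|nra]. unfold Rdiv in He2.
     replace (eps * V * V * / (4 * (R2 * R2)) * (R2 * R2)) with (eps * (V*V) * / 4) in He2 by (field; nra). lra. }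
   assert (V / 2 * (c*c) + R2 * c = L) by (unfold L, c; simpl; field; lra).
   lra. }
 assert (Lo : L - eps / 2 <= INR n * m n).
 { destruct (Rlt_dec s0 d) as [Hsd|Hsd].
   - specialize (Bg s0 ltac:(lra)).
     assert (Hg0 : (V/2 - e) * (s0*s0) <= g s0). { pose proof (Rle_abs (-(g s0 - 0 - 0 * s0 - V / 2 * (s0 * s0)))). rewrite Rabs_Ropp in H. lra. }
     assert (H0 : INR n * ((V/2 - e) * (s0*s0) + R2/sq*s0) <= INR n * m n) by (apply Rmult_le_compat_l; [apply pos_INR|lra]).
     replace (INR n * ((V/2 - e) * (s0*s0) + R2/sq*s0)) with ((V/2 - e) * ((sq*s0)*(sq*s0)) + R2 * (sq*s0)) in H0
       by (rewrite <- Hsq2; field; lra).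
     pose proof (quad_lower (V/2 - e) R2 (sq*s0) ltac:(lra)).
     assert (L - eps/2 <= - (R2*R2) / (4*(V/2 - e))).
     { unfold L. simpl. replace (- (R2 * (R2 * 1)) / (2 * V)) with (- (R2*R2) / (2*V)) by (field; lra).
       assert (R2*R2 / (4*(V/2 - e)) - R2*R2/(2*V) = R2*R2*e/(2*V*(V/2 - e))) by (field; lra).
       assert (R2*R2*e/(2*V*(V/2 - e)) <= eps/2).
       { apply (Rmult_le_reg_r (2*V*(V/2 - e))); [nra|]. unfold Rdiv at 1. rewrite Rmult_assoc, Rinv_l by nra.
         apply (Rmult_le_compat_r (R2*R2)) in He2; [|nra]. unfold Rdiv in He2.
         replace (eps * V * V * / (4 * (R2 * R2)) * (R2 * R2)) with (eps * (V*V) / 4) in He2 by (field; nra).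
         assert (V*V/4 <= V * (V/2 - e)) by nra. nra. }
       unfold Rdiv in *. lra. }
     lra.
   - assert (eta <= g s0) by (apply Hbig; lra).
     assert (- eta <= R2 / sq * s0).
     { assert (- R2 / eta < sq) by lra.
       assert (- R2 < eta * sq). { apply (Rmult_lt_compat_r eta) in H0; [|lra]. unfold Rdiv in H0. rewrite Rmult_assoc, Rinv_l in H0 by lra. lra. }
       assert (-eta <= R2 / sq). { apply (Rmult_le_reg_r sq); auto. unfold Rdiv. rewrite Rmult_assoc, Rinv_l by lra. lra. }
       assert (R2 / sq <= 0). { unfold Rdiv. assert (0 < / sq) by (apply Rinv_0_lt_compat; lra). nra. }
       nra. }
     assert (0 <= m n) by lra.
     assert (0 <= INR n * m n) by (apply Rmult_le_pos; [apply pos_INR|lra]). lra. }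
 unfold R_dist. fold L. apply Rabs_def1; lra. Qed.

Theorem mainTheorem12
  (nx ny : nat) (W : nat -> nat -> R) (P : nat -> R) (C R2 : R)
  (m : nat -> R) :
  (0 < nx)%nat -> (0 < ny)%nat ->
  is_channel nx ny W ->
  is_distr nx P ->
  is_capacity nx ny W C ->
  MI nx ny P W = C ->
  0 < Vdisp nx ny P W ->
  R2 < 0 ->
  (forall n : nat, (0 < n)%nat ->
     is_min_on (fun s => C * s + R2 / sqrt (INR n) * s + psi nx ny P W s) 0 1 (m n)) ->
  Un_cv (fun n => INR n * m n) (- R2 ^ 2 / (2 * Vdisp nx ny P W)).
Proof.
 intros Hnx Hny Hch Hd Hcap HMI HV HR Hmin.
 pose proof (Vdisp_eq nx ny W P Hch Hd C Hcap HMI) as HVe.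
 pose proof (MI_Ii nx ny W P Hch Hd) as HMII.
 apply (limit_core (fun s => C*s + psi nx ny P W s) (Vdisp nx ny P W) R2 (kk nx ny W P)); auto.
 - apply kk_pos.
 - eapply J_coef; [apply (J_plus _ _ _ _ _ _ _ _ (J_scal C _ _ _ _ J_id) (J_psi nx ny W P Hch Hd))| | |].
   + ring.
   + rewrite <- HMI, HMII. ring.
   + rewrite HVe. field.
 - intros s Hs. rewrite HVe. rewrite <- HMI, HMII. apply psi_lower; auto.
 - intros n Hn. apply is_min_on_ext with (f1 := fun s => C*s + R2/sqrt(INR n)*s + psi nx ny P W s); [intros; ring| apply Hmin; auto].
Qed.
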